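(* Let $(\mathcal M^-,\mathcal M^+)$ and $(\mathcal N^-,\mathcal N^+)$ be symbolic matrix bisystems satisfying FPCC. If they are properly strong shift equivalent, then the subshifts $\Lambda_\mathcal M$ and $\Lambda_\mathcal N$ presented by them are topologically conjugate.
   Context: Formal sums/specifications: $\mathfrak S_\Sigma$ = finite formal sums over a finite alphabet $\Sigma$; matrices over $C$ times matrices over $D$ give matrices over $C\cdot D=\{cd\}$; a specification $\phi$ is a bijection from a subset of one alphabet onto a subset of another, and $\mathcal A\overset{\phi}{\simeq}\mathcal A'$ means $\mathcal A'$ is obtained by replacing every symbol $a$ of $\mathcal A$ by $\phi(a)$; $\kappa(ab)=ba$. A symbolic matrix bisystem over $\Sigma^\pm$: $(\mathcal M^-_{l,l+1},\mathcal M^+_{l,l+1})_{l\ge0}$, $m(l)\times m(l+1)$ matrices over $\mathfrak S_{\Sigma^-}$ and $\mathfrak S_{\Sigma^+}$, no zero rows/columns, no symbol repeated within an entry or within a column, and $\mathcal M^-_{l,l+1}\mathcal M^+_{l+1,l+2}\overset{\kappa}{\simeq}\mathcal M^+_{l,l+1}\mathcal M^-_{l+1,l+2}$. FPCC: $m(0)=1$, $\Sigma^-=\Sigma^+=:\Sigma_\mathcal M$, and for every $l\ge1$, $j$, the words in $[\mathcal M^-_{0,1}\cdots\mathcal M^-_{l-1,l}](1,j)$ are exactly the reversals of the words in $[\mathcal M^+_{0,1}\cdots\mathcal M^+_{l-1,l}](1,j)$. Presented subshift $\Lambda_\mathcal M$: the unique subshift of $\Sigma_\mathcal M^{\mathbb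 Z}$ whose nonempty admissible words are exactly the words occurring in entries of the products $\mathcal M^+_{l,l+1}\mathcal M^+_{l+1,l+2}\cdots\mathcal M^+_{l+k-1,l+k}$ ($l\ge0,k\ge1$). Properly strong shift equivalence in 1-step between FPCC systems $(\mathcal M^\pm)$ over $\Sigma_\mathcal M$ and $(\mathcal N^\pm)$ over $\Sigma_\mathcal N$: alphabets $C,D$, specifications $\varphi:\Sigma_\mathcal M\to C\cdot D$, $\phi:\Sigma_\mathcal N\to D\cdot C$, sequences $c(l),d(l)$, matrices $\mathcal P_l$ ($c(l)\times d(l+1)$ over $C$), $\mathcal Q_l$ ($d(l)\times c(l+1)$ over $D$), $\mathcal X_l$ over $D$ ($d(l)\times d(l+1)$ for odd $l$, $c(l)\times c(l+1)$ for even $l$), $\mathcal Y_l$ over $C$ ($c(l)\times c(l+1)$ for odd $l$, $d(l)\times d(l+1)$ for even $l$), with for all $l\ge0$: $\mathcal M^+_{l,l+1}\overset{\varphi}{\simeq}\mathcal P_{2l}\mathcal Q_{2l+1}$, $\mathcal N^+_{l,l+1}\overset{\phi}{\simeq}\mathcal Q_{2l}\mathcal P_{2l+1}$, $\mathcal M^-_{l,l+1}\overset{\kappa\varphi}{\simeq}\mathcal X_{2l}\mathcal Y_{2l+1}$, $\mathcal N^-_{l,l+1}\overset{\kappa\phi}{\simeq}\mathcal Y_{2l}\mathcal X_{2l+1}$, $\mathcal Y_{2l+1}\mathcal P_{2l+2}\overset{\kappa}{\simeq}\mathcal P_{2l+1}\mathcal Y_{2l+2}$, $\mathcal X_{2l+1}\mathcal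 Q_{2l+2}\overset{\kappa}{\simeq}\mathcal Q_{2l+1}\mathcal X_{2l+2}$, $\mathcal X_{2l}\mathcal P_{2l+1}\overset{\kappa}{\simeq}\mathcal P_{2l}\mathcal X_{2l+1}$, $\mathcal Y_{2l}\mathcal Q_{2l+1}\overset{\kappa}{\simeq}\mathcal Q_{2l}\mathcal Y_{2l+1}$. Properly strong shift equivalence: a finite chain of such 1-step equivalences through FPCC symbolic matrix bisystems. *)

(* Defs.v *)
From HB Require Import structures.
From mathcomp Require Import all_boot all_order all_algebra.
From Stdlib Require Import Relations.
Set Implicit Arguments. Unset Strict Implicit. Unset Printing Implicit Defensive.
Import GRing.Theory.

(* Symbolic matrices.  A formal sum over an alphabet (or over words)   *)
(* is a finite list considered up to permutation (i.e. a multiset).    *)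
(* A symbolic matrix is a function  row -> column -> formal sum; its   *)
(* dimensions (rows, columns) are carried separately as nats, and only *)
(* entries (i, j) with i < rows, j < cols are meaningful.              *)

Definition smat (T : Type) := nat -> nat -> seq T.

(* Product of a matrix over A with a matrix over B, inner dimension n:  *)
(* a matrix over A.B = {ab} (pairs).                                   *)
Definition mulm (A B : Type) (n : nat) (X : smat A) (Y : smat B) : smat (A * B) :=
  fun i k => flatten [seq [seq (a, b) | a <- X i j, b <- Y j k] | j <- iota 0 n].

Definition kappa (A B : Type) (p : A * B) : B * A := (p.2, p.1).

(* A specification: a bijection from a subset of one alphabet onto a   *)
(* subset of another = partial injective map.                          *)
Definition spec_inj (A B : Type) (phi : A -> option B) : Prop :=
  forall a a' b, phi a = Some b -> phi a' = Some b -> a = a'.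

Definition spec_eq (A : Type) (B : eqType) (phi : A -> option B)
    (m n : nat) (X : smat A) (m' n' : nat) (Y : smat B) : Prop :=
  m = m' /\ n = n' /\
  forall i j, i < m -> j < n ->
    all (fun a => isSome (phi a)) (X i j) /\ perm_eq (pmap phi (X i j)) (Y i j).

Definition kspec (A B : Type) : A * B -> option (B * A) := fun p => Some (kappa p).

(* dims m : nat -> nat ;  Mm l, Mp l : the m(l) x m(l+1) matrices      *)
(* M^-_{l,l+1}, M^+_{l,l+1}.                                           *)

Definition no_zero_rows_cols (S : eqType) (m n : nat) (X : smat S) : Prop :=
  (forall i, i < m -> exists2 j, j < n & X i j != [::]) /\
  (forall j, j < n -> exists2 i, i < m & X i j != [::]).

Definition no_repeat (S : eqType) (m n : nat) (X : smat S) : Prop :=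
  (forall i j, i < m -> j < n -> uniq (X i j)) /\
  (forall j, j < n -> uniq (flatten [seq X i j | i <- iota 0 m])).

Definition smbisystem (Sm Sp : eqType) (m : nat -> nat)
    (Mm : nat -> smat Sm) (Mp : nat -> smat Sp) : Prop :=
  forall l,
    no_zero_rows_cols (m l) (m l.+1) (Mm l) /\
    no_zero_rows_cols (m l) (m l.+1) (Mp l) /\
    no_repeat (m l) (m l.+1) (Mm l) /\
    no_repeat (m l) (m l.+1) (Mp l) /\
    spec_eq (@kspec Sm Sp) (m l) (m l.+2) (mulm (m l.+1) (Mm l) (Mp l.+1))
                           (m l) (m l.+2) (mulm (m l.+1) (Mp l) (Mm l.+1)).

Fixpoint wprod (S : Type) (m : nat -> nat) (M : nat -> smat S) (l k : nat)
    : smat (seq S) :=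
  match k with
  | 0 => fun i j => if i == j then [:: [::]] else [::]
  | k'.+1 => fun i j =>
      flatten [seq [seq rcons w a | w <- wprod m M l k' i h, a <- M (l + k') h j]
              | h <- iota 0 (m (l + k'))]
  end.

(* FPCC (for a bisystem over a single alphabet S = Sigma^- = Sigma^+). *)
Definition FPCC (S : eqType) (m : nat -> nat) (Mm Mp : nat -> smat S) : Prop :=
  m 0 = 1 /\
  forall l j, 1 <= l -> j < m l ->
    forall i, i < m 0 ->
    forall w : seq S, (w \in wprod m Mm 0 l i j) = (rev w \in wprod m Mp 0 l i j).

Definition fpcc_bisystem (S : eqType) (m : nat -> nat) (Mm Mp : nat -> smat S)
  : Prop := smbisystem m Mm Mp /\ FPCC m Mm Mp.

Definition block (S : Type) (x : int -> S) (i : int) (n : nat) : seq S :=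
  [seq x (i + k%:Z)%R | k <- iota 0 n].

Definition shift (S : Type) (x : int -> S) : int -> S := fun i => x (i + 1)%R.

Definition presented_lang (S : eqType) (m : nat -> nat) (Mp : nat -> smat S)
    (w : seq S) : Prop :=
  w != [::] /\
  exists l k i j, [/\ 0 < k, i < m l, j < m (l + k) & w \in wprod m Mp l k i j].

Definition Lambda (S : eqType) (m : nat -> nat) (Mp : nat -> smat S)
    (x : int -> S) : Prop :=
  forall i n, 0 < n -> presented_lang m Mp (block x i n).

(* Continuity for the product topology on S^Z (S discrete), relative   *)
(* to the subspaces X, Y.                                               *)
Definition agree_on (S : Type) (K : nat) (x y : int -> S) : Prop :=
  forall i : int, (absz i <= K)%N -> x i = y i.

Definition cont_on (S T : Type) (X : (int -> S) -> Prop)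
    (f : (int -> S) -> (int -> T)) : Prop :=
  forall x, X x -> forall N, exists K, forall y, X y ->
    agree_on K y x -> agree_on N (f y) (f x).

Definition top_conjugate (S T : Type) (X : (int -> S) -> Prop)
    (Y : (int -> T) -> Prop) : Prop :=
  exists (f : (int -> S) -> (int -> T)) (g : (int -> T) -> (int -> S)),
    (forall x, X x -> Y (f x)) /\
    (forall y, Y y -> X (g y)) /\
    (forall x, X x -> forall i, g (f x) i = x i) /\
    (forall y, Y y -> forall i, f (g y) i = y i) /\
    cont_on X f /\ cont_on Y g /\
    (forall x, X x -> forall i, f (shift x) i = shift (f x) i).

Record fsys := FSys {
  fs_alph : finType;
  fs_dim : nat -> nat;
  fs_minus : nat -> smat fs_alph;
  fs_plus : nat -> smat fs_alph }.

Definition is_fpcc (s : fsys) : Prop :=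
  fpcc_bisystem (fs_dim s) (fs_minus s) (fs_plus s).

Definition kcomp (A B C : Type) (phi : A -> option (B * C)) : A -> option (C * B) :=
  fun a => omap (@kappa B C) (phi a).

(* Properly strong shift equivalence in 1-step.  X l and Y l have      *)
(* dimensions d(l) x d(l+1) / c(l) x c(l+1) according to parity.       *)
Definition psse1 (s t : fsys) : Prop :=
  let m := fs_dim s in let n := fs_dim t in
  let Mm := fs_minus s in let Mp := fs_plus s in
  let Nm := fs_minus t in let Np := fs_plus t in
  exists (C D : finType)
         (phi : fs_alph s -> option (C * D)) (psi : fs_alph t -> option (D * C))
         (c d : nat -> nat)
         (P : nat -> smat C) (Q : nat -> smat D)
         (X : nat -> smat D) (Y : nat -> smat C),
    spec_inj phi /\ spec_inj psi /\
    forall l,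
      let e := l.*2 in
      spec_eq phi (m l) (m l.+1) (Mp l)
                      (c e) (c e.+2) (mulm (d e.+1) (P e) (Q e.+1)) /\
          spec_eq psi (n l) (n l.+1) (Np l)
                      (d e) (d e.+2) (mulm (c e.+1) (Q e) (P e.+1)) /\
          spec_eq (kcomp phi) (m l) (m l.+1) (Mm l)
                      (c e) (c e.+2) (mulm (c e.+1) (X e) (Y e.+1)) /\
          spec_eq (kcomp psi) (n l) (n l.+1) (Nm l)
                      (d e) (d e.+2) (mulm (d e.+1) (Y e) (X e.+1)) /\
          spec_eq (@kspec C C) (c e.+1) (d e.+3) (mulm (c e.+2) (Y e.+1) (P e.+2))
                      (c e.+1) (d e.+3) (mulm (d e.+2) (P e.+1) (Y e.+2)) /\
          spec_eq (@kspec D D) (d e.+1) (c e.+3) (mulm (d e.+2) (X e.+1) (Q e.+2))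
                      (d e.+1) (c e.+3) (mulm (c e.+2) (Q e.+1) (X e.+2)) /\
          spec_eq (@kspec D C) (c e) (d e.+2) (mulm (c e.+1) (X e) (P e.+1))
                      (c e) (d e.+2) (mulm (d e.+1) (P e) (X e.+1)) /\
          spec_eq (@kspec C D) (d e) (c e.+2) (mulm (d e.+1) (Y e) (Q e.+1))
                      (d e) (c e.+2) (mulm (c e.+1) (Q e) (Y e.+1)).

Definition psse_step (s t : fsys) : Prop := [/\ is_fpcc s, is_fpcc t & psse1 s t].

Definition psse (s t : fsys) : Prop := clos_refl_sym_trans fsys psse_step s t.

(* Main.v *)
Require Import Defs.
From HB Require Import structures.
From mathcomp Require Import all_boot all_order all_algebra.
From mathcomp Require Import zify.
From Stdlib Require Import Relations FunctionalExtensionality.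
Set Implicit Arguments. Unset Strict Implicit. Unset Printing Implicit Defensive.

Lemma mulmP (A B : eqType) (n : nat) (X : smat A) (Y : smat B) i k a b :
  (a, b) \in mulm n X Y i k <-> exists h, [/\ h < n, a \in X i h & b \in Y h k].
Proof.
rewrite /mulm; split.
- case/flatten_mapP => h; rewrite mem_iota /= => Hh /allpairsP [[a' b'] /= [Ha Hb [-> ->]]].
  by exists h.
- case=> h [Hh Ha Hb]; apply/flatten_mapP; exists h; first by rewrite mem_iota.
  by apply/allpairsP; exists (a, b).
Qed.

Lemma spec_eq_fw (A B : eqType) (phi : A -> option B) m n X m' n' Y i j (a : A) :
  spec_eq phi m n X m' n' Y -> i < m -> j < n -> a \in X i j ->
  exists2 b, phi a = Some b & b \in Y i j.
Proof.
case=> _ [_ H] Hi Hj Ha; have [/allP Hall Hp] := H i j Hi Hj.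
move: (Hall a Ha); case E: (phi a) => [b|] //= _; exists b => //.
by rewrite -(perm_mem Hp) mem_pmap -E map_f.
Qed.

Lemma spec_eq_bw (A B : eqType) (phi : A -> option B) m n X m' n' Y i j (b : B) :
  spec_eq phi m n X m' n' Y -> i < m -> j < n -> b \in Y i j ->
  exists2 a, a \in X i j & phi a = Some b.
Proof.
case=> _ [_ H] Hi Hj Hb; have [_ Hp] := H i j Hi Hj.
by move: Hb; rewrite -(perm_mem Hp) mem_pmap => /mapP [a Ha E]; exists a.
Qed.

Lemma spec_eq_dim (A : Type) (B : eqType) (phi : A -> option B) m n X m' n' Y :
  spec_eq phi m n X m' n' Y -> m = m' /\ n = n'.
Proof. by case=> -> [-> _]. Qed.

Lemma bchoice (P : nat -> nat -> bool) (B : nat -> nat) K :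
  (forall t, t < K -> exists2 h, h < B t & P t h) ->
  exists g, forall t, t < K -> g t < B t /\ P t (g t).
Proof.
move=> H; exists (fun t => find (P t) (iota 0 (B t))) => t /H [h Hh Ph].
have Hh' : has (P t) (iota 0 (B t)) by apply/hasP; exists h => //; rewrite mem_iota.
split; first by move: Hh'; rewrite has_find size_iota.
have := nth_find 0 Hh'; rewrite nth_iota //.
by move: Hh'; rewrite has_find size_iota.
Qed.

Lemma wprod_path (A : eqType) (m : nat -> nat) (M : nat -> smat A) l K i j w a0 :
  i < m l -> j < m (l + K) -> w \in wprod m M l K i j ->
  size w = K /\ exists v, [/\ v 0 = i, v K = j &
    forall t, t < K -> [/\ v t < m (l + t), v t.+1 < m (l + t.+1) &
                          nth a0 w t \in M (l + t) (v t) (v t.+1)]].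
Proof.
move=> Hi; elim: K j w => [|K IH] j w Hj /=.
  case: eqP => [<-|] //; rewrite inE => /eqP ->; split => //.
  by exists (fun _ => i).
case/flatten_mapP => h; rewrite mem_iota /= => Hh /allpairsP [[w' a] /= [Hw' Ha ->]].
have [Hs [v [Hv0 HvK Hv]]] := IH h w' Hh Hw'.
rewrite size_rcons Hs; split => //.
exists (fun t => if t == K.+1 then j else v t); split => //; first by rewrite eqxx.
move=> t; rewrite ltnS leq_eqVlt => /orP [/eqP ->|Ht].
  rewrite eqxx (ltn_eqF (ltnSn K)) HvK nth_rcons Hs ltnn eqxx; split => //.
have [H1 H2 H3] := Hv t Ht; rewrite (ltn_eqF (ltn_trans Ht (ltnSn K))).
rewrite eqSS (ltn_eqF Ht) nth_rcons Hs Ht; split => //.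
Qed.

Lemma path_wprod (A : eqType) (m : nat -> nat) (M : nat -> smat A) l K (s : nat -> A) v :
  v 0 < m l ->
  (forall t, t < K -> [/\ v t < m (l + t), v t.+1 < m (l + t.+1) &
                          s t \in M (l + t) (v t) (v t.+1)]) ->
  map s (iota 0 K) \in wprod m M l K (v 0) (v K).
Proof.
move=> H0; elim: K => [|K IH] H /=; first by rewrite eqxx inE.
apply/flatten_mapP; exists (v K).
  by have [H1 _ _] := H K (ltnSn K); rewrite mem_iota /=.
apply/allpairsP; exists (map s (iota 0 K), s K) => /=; split.
- by apply: IH => t Ht; apply: H; apply: ltnW.
- by have [_ _ H3] := H K (ltnSn K).
- by change (map s (iota 0 K.+1) = rcons (map s (iota 0 K)) (s K)); rewrite -map_rcons -cats1 -[K.+1]addn1 iotaD.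
Qed.

Lemma intE1 (i : int) (t : nat) : (i + t%:Z = i - 1 + t.+1%:Z)%R.
Proof. lia. Qed.
Lemma intE2 (i : int) (t : nat) : (i + t%:Z + 1 = i - 1 + t.+2%:Z)%R.
Proof. lia. Qed.

Lemma intE0 (i : int) : (i + 0%:Z)%R = i.
Proof. lia. Qed.

Section OneDir.
Variables (S T C D : finType).
Variables (m n c d : nat -> nat) (Mm Mp : nat -> smat S) (Np : nat -> smat T).
Variables (phi : S -> option (C * D)) (psi : T -> option (D * C)).
Variables (P : nat -> smat C) (Q : nat -> smat D) (X : nat -> smat D) (Y : nat -> smat C).
Variable t0 : T.
Hypothesis psi_inj : spec_inj psi.
Hypothesis Mm_col : forall l j, j < m l.+1 -> exists2 i, i < m l & Mm l i j != [::].
Hypothesis H1 : forall l, spec_eq phi (m l) (m l.+1) (Mp l) (c l.*2) (c l.*2.+2)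
   (mulm (d l.*2.+1) (P l.*2) (Q l.*2.+1)).
Hypothesis H2 : forall l, spec_eq psi (n l) (n l.+1) (Np l) (d l.*2) (d l.*2.+2)
   (mulm (c l.*2.+1) (Q l.*2) (P l.*2.+1)).
Hypothesis H3 : forall l, spec_eq (kcomp phi) (m l) (m l.+1) (Mm l) (c l.*2) (c l.*2.+2)
   (mulm (c l.*2.+1) (X l.*2) (Y l.*2.+1)).
Hypothesis H5 : forall l, spec_eq (@kspec C C) (c l.*2.+1) (d l.*2.+3)
   (mulm (c l.*2.+2) (Y l.*2.+1) (P l.*2.+2)) (c l.*2.+1) (d l.*2.+3)
   (mulm (d l.*2.+2) (P l.*2.+1) (Y l.*2.+2)).
Hypothesis H8 : forall l, spec_eq (@kspec C D) (d l.*2) (c l.*2.+2)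
   (mulm (d l.*2.+1) (Y l.*2) (Q l.*2.+1)) (d l.*2) (c l.*2.+2)
   (mulm (c l.*2.+1) (Q l.*2) (Y l.*2.+1)).

Lemma lift L k (cc : nat -> C) (dd : nat -> D) (g v : nat -> nat) u :
 (forall t, t < k -> [/\ g t < d (L+t).*2.+1, v t.+1 < c (L+t).*2.+2,
     g t.+1 < d (L+t).*2.+3, dd t \in Q (L+t).*2.+1 (g t) (v t.+1)
   & cc t.+1 \in P (L+t).*2.+2 (v t.+1) (g t.+1)]) ->
 u < d L.*2 -> Y L.*2 u (g 0) != [::] ->
 exists w, [/\ w 0 = u, w k < d (L+k).*2, Y (L+k).*2 (w k) (g k) != [::] &
   forall t, t < k -> [/\ w t < d (L+t).*2, w t.+1 < d (L+t).*2.+2 &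
      exists2 z, z < c (L+t).*2.+1 &
        (dd t \in Q (L+t).*2 (w t) z) /\ (cc t.+1 \in P (L+t).*2.+1 z (w t.+1))]].
Proof.
elim: k => [|k IH] H Hu HY.
  by exists (fun _ => u); rewrite addn0.
have [w [Hw0 Hwk HYk Hw]] := IH (fun t Ht => H t (ltnW Ht)) Hu HY.
have [Hg Hv Hg' Hdd Hcc] := H k (ltnSn k).
case E: (Y (L+k).*2 (w k) (g k)) HYk => [|y ys] // _.
have Hy : y \in Y (L+k).*2 (w k) (g k) by rewrite E inE eqxx.
have Hm : (y, dd k) \in mulm (d (L+k).*2.+1) (Y (L+k).*2) (Q (L+k).*2.+1) (w k) (v k.+1).
  by apply/mulmP; exists (g k).
have [p Hp Hp'] := spec_eq_fw (H8 (L+k)) Hwk Hv Hm.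
case: Hp Hp' => <- /mulmP [z [Hz Hq Hy2]].
have Hm2 : (y, cc k.+1) \in mulm (c (L+k).*2.+2) (Y (L+k).*2.+1) (P (L+k).*2.+2) z (g k.+1).
  by apply/mulmP; exists (v k.+1).
have [p2 Hp2 Hp2'] := spec_eq_fw (H5 (L+k)) Hz Hg' Hm2.
case: Hp2 Hp2' => <- /mulmP [w1 [Hw1 Hp3 Hy3]].
exists (fun t => if t == k.+1 then w1 else w t); split => //.
- by rewrite eqxx addnS doubleS.
- rewrite eqxx addnS doubleS; apply/eqP => E'; by rewrite E' in Hy3.
move=> t; rewrite ltnS leq_eqVlt => /orP [/eqP ->|Ht].
  rewrite eqxx (ltn_eqF (ltnSn k)); split => //.
  by exists z.
have [A1 A2 A3] := Hw t Ht; rewrite (ltn_eqF (ltn_trans Ht (ltnSn k))).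
by rewrite eqSS (ltn_eqF Ht).
Qed.


Definition fmap (x : int -> S) (i : int) : T :=
  match phi (x i), phi (x (i + 1)%R) with
  | Some (_, d1), Some (c2, _) =>
      if [pick b | psi b == Some (d1, c2)] is Some b then b else t0
  | _, _ => t0
  end.

Lemma fmap_eq x i c1 d1 c2 d2 b :
  phi (x i) = Some (c1, d1) -> phi (x (i + 1)%R) = Some (c2, d2) ->
  psi b = Some (d1, c2) -> fmap x i = b.
Proof.
move=> E1 E2 Eb; rewrite /fmap E1 E2; case: pickP => [b' /eqP Hb'|/(_ b)].
  exact: psi_inj Hb' Eb.
by rewrite Eb eqxx.
Qed.

Lemma fmain x : Lambda m Mp x -> forall i k, exists L w, [/\ w 0 < n L,
  forall t, t < k -> [/\ w t < n (L + t), w t.+1 < n (L + t.+1) &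
                      fmap x (i + t%:Z)%R \in Np (L + t) (w t) (w t.+1)] &
  forall t, t < k -> exists c1 d1 c2 d2,
     [/\ phi (x (i + t%:Z)%R) = Some (c1, d1), phi (x (i + t%:Z + 1)%R) = Some (c2, d2)
       & psi (fmap x (i + t%:Z)%R) = Some (d1, c2)]].
Proof.
move=> Hx i k.
pose s := fun t : nat => x (i - 1 + t%:Z)%R.
have [_ [l [K [i0 [j [_ Hi0 Hj Hw]]]]]] := Hx (i - 1)%R k.+2 isT.
have [HK [v [Hv0 HvK Hv]]] := wprod_path (x 0) Hi0 Hj Hw.
rewrite /block size_map size_iota in HK; subst K.
have Hv' : forall t, t < k.+2 -> [/\ v t < m (l + t), v t.+1 < m (l + t.+1)
     & s t \in Mp (l + t) (v t) (v t.+1)].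
  move=> t Ht; have [a b e] := Hv t Ht; split => //.
  by rewrite /block (nth_map 0) ?size_iota // nth_iota // add0n in e.
have Hphi : forall t, t < k.+2 -> exists p, phi (s t) = Some p /\
    p \in mulm (d (l+t).*2.+1) (P (l+t).*2) (Q (l+t).*2.+1) (v t) (v t.+1).
  move=> t /Hv' [a b e]; rewrite addnS in b.
  by have [p Hp Hp'] := spec_eq_fw (H1 (l+t)) a b e; exists p.
have [[c0 d0] _] := Hphi 0 isT.
pose cc := fun t => (odflt (c0, d0) (phi (s t))).1.
pose dd := fun t => (odflt (c0, d0) (phi (s t))).2.
have Hcd : forall t, t < k.+2 -> phi (s t) = Some (cc t, dd t) /\
    exists2 h, h < d (l+t).*2.+1 &
      (cc t \in P (l+t).*2 (v t) h) && (dd t \in Q (l+t).*2.+1 h (v t.+1)).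
  move=> t Ht; have [[p1 p2] [Hp Hm]] := Hphi t Ht; rewrite /cc /dd Hp /=; split => //.
  by move/mulmP: Hm => [h [? ? ?]]; exists h => //; apply/andP.
have [g Hg] := @bchoice (fun t h => (cc t \in P (l+t).*2 (v t) h) &&
       (dd t \in Q (l+t).*2.+1 h (v t.+1))) (fun t => d (l+t).*2.+1) k.+2
       (fun t Ht => (Hcd t Ht).2).
have [v1b _ _] := Hv' 1 isT; rewrite addn1 in v1b.
have [r Hr Hne] := Mm_col v1b.
case E: (Mm l r (v 1)) Hne => [|a' as'] // _.
have Ha' : a' \in Mm l r (v 1) by rewrite E inE eqxx.
have [[dv cv] _ /mulmP [h [Hh _ Hcv]]] := spec_eq_fw (H3 l) Hr v1b Ha'.
have [g1b /andP [Hc1 Hd1]] := Hg 1 isT.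
rewrite addn1 doubleS in g1b Hc1.
have [_ Em] := spec_eq_dim (H1 l).
have Hm : (cv, cc 1) \in mulm (c l.*2.+2) (Y l.*2.+1) (P l.*2.+2) h (g 1).
  by apply/mulmP; exists (v 1); rewrite -Em.
have [p2 Hp2 Hp2'] := spec_eq_fw (H5 l) Hh g1b Hm.
case: Hp2 Hp2' => <- /mulmP [u [Hu _ Hyu]].
have HL : forall t, t < k -> [/\ g t.+1 < d (l.+1+t).*2.+1, v t.+2 < c (l.+1+t).*2.+2,
     g t.+2 < d (l.+1+t).*2.+3, dd t.+1 \in Q (l.+1+t).*2.+1 (g t.+1) (v t.+2)
   & cc t.+2 \in P (l.+1+t).*2.+2 (v t.+2) (g t.+2)].
  move=> t Ht.
  have Ht1 : t.+1 < k.+2 by rewrite ltnS ltnW.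
  have Ht2 : t.+2 < k.+2 by rewrite !ltnS.
  have [Ga /andP [_ Gb]] := Hg t.+1 Ht1.
  have [Gc /andP [Gd _]] := Hg t.+2 Ht2.
  have [_ Vb _] := Hv' t.+1 Ht1.
  have [Em2 _] := spec_eq_dim (H1 (l + t.+2)).
  rewrite Em2 in Vb.
  move: Ga Gb Gc Gd Vb; rewrite !addSn !addnS !doubleS => Ga Gb Gc Gd Vb.
  by split.
have Hu' : u < d (l.+1).*2 by rewrite doubleS.
have HY : Y (l.+1).*2 u (g 1) != [::].
  by rewrite doubleS; apply/eqP => E'; rewrite E' in Hyu.
have [w [Hw0 _ _ Hw']] := @lift (l.+1) k (fun t => cc t.+1) (fun t => dd t.+1)
   (fun t => g t.+1) (fun t => v t.+1) u HL Hu' HY.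
have key : forall t, t < k -> exists b, [/\ b \in Np (l.+1+t) (w t) (w t.+1),
    psi b = Some (dd t.+1, cc t.+2), fmap x (i + t%:Z)%R = b,
    phi (x (i + t%:Z)%R) = Some (cc t.+1, dd t.+1) &
    phi (x (i + t%:Z + 1)%R) = Some (cc t.+2, dd t.+2)] /\
    w t < n (l.+1 + t) /\ w t.+1 < n (l.+1 + t.+1).
  move=> t Ht.
  have [A1 A2 [z Hz [Hq Hp]]] := Hw' t Ht.
  have [En1 En2] := spec_eq_dim (H2 (l.+1+t)).
  have Hm3 : (dd t.+1, cc t.+2) \in mulm (c (l.+1+t).*2.+1) (Q (l.+1+t).*2)
      (P (l.+1+t).*2.+1) (w t) (w t.+1) by apply/mulmP; exists z.
  have A1' : w t < n (l.+1+t) by rewrite En1.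
  have A2' : w t.+1 < n (l.+1+t).+1 by rewrite En2.
  have [b Hb Eb] := spec_eq_bw (H2 (l.+1+t)) A1' A2' Hm3.
  have Ex1 : x (i + t%:Z)%R = s t.+1 by rewrite /s intE1.
  have Ex2 : x (i + t%:Z + 1)%R = s t.+2 by rewrite /s intE2.
  have Ht1 : t.+1 < k.+2 by rewrite ltnS ltnW.
  have Ht2 : t.+2 < k.+2 by rewrite !ltnS.
  have [P1 _] := Hcd t.+1 Ht1; have [P2 _] := Hcd t.+2 Ht2.
  exists b; split; last by split; [exact: A1' | rewrite addnS].
  split.
  - exact: Hb.
  - exact: Eb.
  - by apply: (@fmap_eq x (i + t%:Z)%R (cc t.+1) (dd t.+1) (cc t.+2) (dd t.+2)); rewrite ?Ex1 ?Ex2.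
  - by rewrite Ex1.
  - by rewrite Ex2.
exists l.+1, w; split.
- by have [En1 _] := spec_eq_dim (H2 l.+1); rewrite En1 Hw0.
- move=> t Ht; have [b [[Hb _ Eb _ _] [B1 B2]]] := key t Ht.
  by split => //; rewrite Eb.
- move=> t Ht; have [b [[Hb Eb1 Eb Ep1 Ep2] _]] := key t Ht.
  by exists (cc t.+1), (dd t.+1), (cc t.+2), (dd t.+2); rewrite Eb; split.
Qed.


Lemma fmap_Lambda x : Lambda m Mp x -> Lambda n Np (fmap x).
Proof.
move=> Hx i k Hk; have [L [w [Hw0 Hw _]]] := fmain Hx i k.
split; first by rewrite /block -size_eq0 size_map size_iota -lt0n.
exists L, k, (w 0), (w k); split => //.
  by case: k Hk Hw => // k _ Hw; have [_ B _] := Hw k (ltnSn k).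
exact: (path_wprod Hw0 (fun t Ht => Hw t Ht)).
Qed.

Lemma fmap_spec x : Lambda m Mp x -> forall i, exists c1 d1 c2 d2,
  [/\ phi (x i) = Some (c1, d1), phi (x (i + 1)%R) = Some (c2, d2)
    & psi (fmap x i) = Some (d1, c2)].
Proof.
move=> Hx i; have [L [w [_ _ H]]] := fmain Hx i 1.
by have := H 0 isT; rewrite intE0.
Qed.

End OneDir.

Lemma intE3 (i : int) (N : nat) : (absz i <= N)%N -> (absz (i + 1)%R <= N.+1)%N.
Proof. lia. Qed.
Lemma intE4 (i : int) (N : nat) : (absz i <= N)%N -> (absz (i - 1)%R <= N.+1)%N.
Proof. lia. Qed.
Lemma intE5 (i : int) (N : nat) : (absz i <= N)%N -> (absz i <= N.+1)%N.
Proof. lia. Qed.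

Lemma fmap_cont (S T C D : finType) (phi : S -> option (C * D)) (psi : T -> option (D * C))
  t0 (Z : (int -> S) -> Prop) : cont_on Z (fmap phi psi t0).
Proof.
move=> x _ N; exists N.+1 => y _ Hag i Hi.
by rewrite /fmap (Hag i (intE5 Hi)) (Hag (i + 1)%R (intE3 Hi)).
Qed.

Lemma intE6 (i : int) (k : nat) : (i + k%:Z + 1 = i + 1 + k%:Z)%R.
Proof. lia. Qed.
Lemma intE7 (i : int) (k : nat) : (i + k%:Z - 1 = i - 1 + k%:Z)%R.
Proof. lia. Qed.
Lemma intE8 (i : int) : (i - 1 + 1 = i)%R.
Proof. lia. Qed.
Lemma intE9 (i : int) : (i + 1 - 1 = i)%R.
Proof. lia. Qed.

Lemma Lambda_shift (S : eqType) (m : nat -> nat) (Mp : nat -> smat S) x :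
  Lambda m Mp x -> Lambda m Mp (shift x).
Proof.
move=> Hx i k Hk; have := Hx (i + 1)%R k Hk.
congr presented_lang; rewrite /block /shift; apply: eq_map => t; by rewrite intE6.
Qed.

Lemma Lambda_pred (S : eqType) (m : nat -> nat) (Mp : nat -> smat S) x :
  Lambda m Mp x -> Lambda m Mp (fun i => x (i - 1)%R).
Proof.
move=> Hx i k Hk; have := Hx (i - 1)%R k Hk.
congr presented_lang; rewrite /block; apply: eq_map => t; by rewrite intE7.
Qed.

Lemma tc_refl (S : Type) (Z : (int -> S) -> Prop) : top_conjugate Z Z.
Proof.
exists (fun x => x), (fun x => x).
split; [by []|split; [by []|split; [by []|split; [by []|split; [|split; [|by []]]]]]];
  by move=> x _ N; exists N => y _ H.
Qed.

Lemma tc_sym (S T : Type) (X : (int -> S) -> Prop) (Y : (int -> T) -> Prop) :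
  (forall x, X x -> X (shift x)) -> top_conjugate X Y -> top_conjugate Y X.
Proof.
move=> HX [f [g [A [B [C [D [E [F G]]]]]]]].
exists g, f.
split; [by []|split; [by []|split; [by []|split; [by []|split; [by []|split; [by []|]]]]]].
move=> y Hy i.
have Ey : shift y = f (shift (g y)).
  apply: functional_extensionality => j.
  rewrite G; last exact: B.
  by rewrite /shift D.
by rewrite Ey C; [rewrite /shift | apply: HX; apply: B].
Qed.

Lemma tc_trans (S T U : Type) (X : (int -> S) -> Prop) (Y : (int -> T) -> Prop)
   (Z : (int -> U) -> Prop) :
  top_conjugate X Y -> top_conjugate Y Z -> top_conjugate X Z.
Proof.
move=> [f1 [g1 [A1 [B1 [C1 [D1 [E1 [F1 G1]]]]]]]].
move=> [f2 [g2 [A2 [B2 [C2 [D2 [E2 [F2 G2]]]]]]]].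
exists (fun x => f2 (f1 x)), (fun z => g1 (g2 z)); split; [|split; [|split; [|split; [|split; [|split]]]]].
- by move=> x Hx; apply: A2; apply: A1.
- by move=> z Hz; apply: B1; apply: B2.
- move=> x Hx i; have -> : g2 (f2 (f1 x)) = f1 x.
    by apply: functional_extensionality => j; apply: C2; apply: A1.
  exact: C1.
- move=> z Hz i; have -> : f1 (g1 (g2 z)) = g2 z.
    by apply: functional_extensionality => j; apply: D1; apply: B2.
  exact: D2.
- move=> x Hx N; have [K2 HK2] := E2 (f1 x) (A1 x Hx) N.
  have [K1 HK1] := E1 x Hx K2; exists K1 => y Hy Hag.
  by apply: HK2; [apply: A1 | apply: HK1].
- move=> z Hz N; have [K2 HK2] := F1 (g2 z) (B2 z Hz) N.
  have [K1 HK1] := F2 z Hz K2; exists K1 => y Hy Hag.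
  by apply: HK2; [apply: B2 | apply: HK1].
- move=> x Hx i; have -> : f1 (shift x) = shift (f1 x).
    by apply: functional_extensionality => j; apply: G1.
  by apply: G2; apply: A1.
Qed.

Lemma gmap_cont (S T C D : finType) (phi : S -> option (C * D)) (psi : T -> option (D * C))
  t0 (Z : (int -> S) -> Prop) : cont_on Z (fun y i => fmap phi psi t0 y (i - 1)%R).
Proof.
move=> x _ N; exists N.+1 => y _ Hag i Hi.
by rewrite /fmap (Hag (i - 1)%R (intE4 Hi)) intE8 (Hag i (intE5 Hi)).
Qed.

Lemma step_conj (s t : fsys) : psse_step s t ->
  top_conjugate (Lambda (fs_dim s) (fs_plus s)) (Lambda (fs_dim t) (fs_plus t)).
Proof.
case=> Hs Ht [C [D [phi [psi [c [d [P [Q [X [Y [Iphi [Ipsi H]]]]]]]]]]]].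
have H1 := fun l => (H l).1.
have H2 := fun l => (H l).2.1.
have H3 := fun l => (H l).2.2.1.
have H4 := fun l => (H l).2.2.2.1.
have H5 := fun l => (H l).2.2.2.2.1.
have H6 := fun l => (H l).2.2.2.2.2.1.
have H7 := fun l => (H l).2.2.2.2.2.2.1.
have H8 := fun l => (H l).2.2.2.2.2.2.2.
have Mcol : forall l j, j < fs_dim s l.+1 -> exists2 i, i < fs_dim s l & fs_minus s l i j != [::].
  by move=> l j; have [[_ Hc] _] := Hs.1 l; apply: Hc.
have Ncol : forall l j, j < fs_dim t l.+1 -> exists2 i, i < fs_dim t l & fs_minus t l i j != [::].
  by move=> l j; have [[_ Hc] _] := Ht.1 l; apply: Hc.
have [t0 _] : exists t0 : fs_alph t, True.
  have [_ [[Hr _] _]] := Ht.1 0; have [j _] := Hr 0 (ltac:(by rewrite Ht.2.1)).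
  by case: (fs_plus t 0 0 j) => [|a _] //; exists a.
have [s0 _] : exists s0 : fs_alph s, True.
  have [_ [[Hr _] _]] := Hs.1 0; have [j _] := Hr 0 (ltac:(by rewrite Hs.2.1)).
  by case: (fs_plus s 0 0 j) => [|a _] //; exists a.
have FL := fmap_Lambda t0 Ipsi Mcol H1 H2 H3 H5 H8.
have FS := fmap_spec t0 Ipsi Mcol H1 H2 H3 H5 H8.
have GL := fmap_Lambda s0 Iphi Ncol H2 H1 H4 H6 H7.
have GS := fmap_spec s0 Iphi Ncol H2 H1 H4 H6 H7.
exists (fmap phi psi t0), (fun y i => fmap psi phi s0 y (i - 1)%R).
split; [|split; [|split; [|split; [|split; [|split]]]]].
- exact: FL.
- by move=> y Hy; apply: Lambda_pred; apply: GL.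
- move=> x Hx i.
  have [c1 [d1 [c2 [d2 [E1 E2 E3]]]]] := FS x Hx (i - 1)%R.
  have [c3 [d3 [c4 [d4 [F1 F2 F3]]]]] := FS x Hx i.
  rewrite intE8 F1 in E2; case: E2 => Ec Ed; subst c3 d3.
  apply: (fmap_eq s0 Iphi (c1 := d1) (d1 := c2) (c2 := d2) (d2 := c4)) => //.
  by rewrite intE8.
- move=> y Hy i.
  have [c1 [d1 [c2 [d2 [E1 E2 E3]]]]] := GS y Hy (i - 1)%R.
  have [c3 [d3 [c4 [d4 [F1 F2 F3]]]]] := GS y Hy i.
  rewrite intE8 F1 in E2; case: E2 => Ec Ed.
  apply: (fmap_eq t0 Ipsi (c1 := d1) (d1 := c2) (c2 := d3) (d2 := c4)) => //.
    by rewrite intE9.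
  by rewrite F1 Ec.
- exact: fmap_cont.
- exact: gmap_cont.
- by [].
Qed.

Lemma psse_conj (s t : fsys) : psse s t ->
  top_conjugate (Lambda (fs_dim s) (fs_plus s)) (Lambda (fs_dim t) (fs_plus t)).
Proof.
elim=> [x y Hxy|x|x y _ IH|x y z _ IH1 _ IH2].
- exact: step_conj.
- exact: tc_refl.
- by apply: tc_sym IH => u; apply: Lambda_shift.
- exact: tc_trans IH1 IH2.
Qed.

Unset Implicit Arguments.
Theorem theorem6p14 (S T : finType)
    (m : nat -> nat) (Mm Mp : nat -> smat S)
    (n : nat -> nat) (Nm Np : nat -> smat T) :
  fpcc_bisystem m Mm Mp ->
  fpcc_bisystem n Nm Np ->
  psse (FSys m Mm Mp) (FSys n Nm Np) ->
  top_conjugate (Lambda m Mp) (Lambda n Np).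
Proof. by move=> _ _ /psse_conj. Qed.
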